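(* Let $s\ge 2$. Suppose the edges of the complete graph $K_s$ are coloured with $s-1$ colours such that each colour class is a matching and every set of $4$ vertices spans edges of either exactly $3$ or exactly $6$ different colours. Then $s=2^p$ for some integer $p$. *)

(* Defs.v *)
From mathcomp Require Import all_boot.
Set Implicit Arguments. Unset Strict Implicit. Unset Printing Implicit Defensive.

(* An edge colouring of the complete graph K_s on vertex set 'I_s with colours
   in a type C is a function col : 'I_s -> 'I_s -> C that is symmetric on edges
   (values on the diagonal col v v are irrelevant). *)
Definition sym_colouring (s : nat) (C : Type) (col : 'I_s -> 'I_s -> C) : Prop :=
  forall u v : 'I_s, u != v -> col u v = col v u.

Definition classes_are_matchings (s : nat) (C : Type) (col : 'I_s -> 'I_s -> C) : Prop :=
  forall u v w : 'I_s, u != v -> u != w -> v != w -> col u v <> col u w.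

Definition colours4 (s : nat) (C : eqType) (col : 'I_s -> 'I_s -> C)
  (a b c d : 'I_s) : nat :=
  size (undup [:: col a b; col a c; col a d; col b c; col b d; col c d]).

Definition four_sets_3_or_6 (s : nat) (C : eqType) (col : 'I_s -> 'I_s -> C) : Prop :=
  forall a b c d : 'I_s, uniq [:: a; b; c; d] ->
    colours4 col a b c d = 3 \/ colours4 col a b c d = 6.

(* Main.v *)
Require Import Defs.
From mathcomp Require Import all_boot.
From mathcomp Require Import fingroup perm pgroup cyclic.

Lemma keyL (s : nat) (col : 'I_s -> 'I_s -> 'I_(s.-1))
  (hsym : sym_colouring col)
  (hmatch : classes_are_matchings col)
  (h4 : four_sets_3_or_6 col) (a b c d : 'I_s) :
  a != b -> c != d -> a != c -> col a b = col c d -> col a c = col b d.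
Proof.
move=> ab cd ac E.
have [bd|bd] := eqVneq b d.
  subst d; exfalso.
  have cb : b != c by rewrite eq_sym.
  have ba : b != a by rewrite eq_sym.
  apply: (hmatch b a c ba cb ac).
  by rewrite -hsym // E hsym.
have [ad|ad] := eqVneq a d.
  subst d.
  have [bc|bc] := eqVneq b c; first by subst c; rewrite hsym.
  exfalso; apply: (hmatch a b c ab ac bc); by rewrite E hsym // eq_sym.
have [bc|bc] := eqVneq b c.
  subst c; exfalso.
  have ba : b != a by rewrite eq_sym.
  by apply: (hmatch b a d ba bd ad); rewrite -hsym.
have U : uniq [:: a; b; c; d].
  by rewrite /= !inE !negb_or ab ac ad bc bd cd.
have m1 := hmatch a b c ab ac bc.
have m2 := hmatch a b d ab ad bd.
have m3 := hmatch a c d ac ad cd.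
have ba : b != a by rewrite eq_sym.
have m4 : col a b <> col b d by rewrite hsym //; apply: hmatch.
have da : d != a by rewrite eq_sym.
have db : d != b by rewrite eq_sym.
have m5 : col a d <> col b d.
  by rewrite hsym // [col b d]hsym //; apply: hmatch.
case: (h4 a b c d U); rewrite /colours4 => H; last first.
  exfalso.
  have : size (undup [:: col a b; col a c; col a d; col b c; col b d; col c d])
       <= size [:: col a b; col a c; col a d; col b c; col b d].
    apply: uniq_leq_size; first exact: undup_uniq.
    move=> x; rewrite mem_undup !inE -E.
    by case/orP=> [->|/orP[->|/orP[->|/orP[->|/orP[->|->]]]]]; rewrite ?orbT.
  by rewrite H.
case: (eqVneq (col a c) (col b d)) => // ne; exfalso.
have : size [:: col a b; col a c; col a d; col b d]
   <= size (undup [:: col a b; col a c; col a d; col b c; col b d; col c d]).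
  apply: uniq_leq_size.
    rewrite /= !inE !negb_or.
    by rewrite !(introN eqP m1, introN eqP m2, introN eqP m3, introN eqP m4,
                 introN eqP m5, ne).
  by move=> x; rewrite mem_undup !inE; case/orP=> [->|/orP[->|/orP[->|->]]]; rewrite ?orbT.
by rewrite H.
Qed.

Theorem lemma4p2 (s : nat) (hs : 2 <= s) (col : 'I_s -> 'I_s -> 'I_(s.-1))
  (hsym : sym_colouring col)
  (hmatch : classes_are_matchings col)
  (h4 : four_sets_3_or_6 col) :
  exists p : nat, s = 2 ^ p.
Proof.
have L := @keyL _ _ hsym hmatch h4.
have s0 : 0 < s by apply: leq_trans hs.
pose z := Ordinal s0.
have ex : forall (x : 'I_s) (k : 'I_(s.-1)), exists2 y, y != x & col x y = k.
  move=> x k.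
  have inj : {in [set~ x] &, injective (col x)}.
    move=> y1 y2; rewrite !inE => h1 h2 E.
    apply/eqP; apply/negPn/negP => ne.
    by apply: (hmatch x y1 y2 _ _ ne E); rewrite eq_sym.
  have F : [set col x y | y in [set~ x]] = [set: 'I_(s.-1)].
    apply/eqP; rewrite eqEcard subsetT cardsT card_ord card_in_imset //.
    by rewrite cardsC1 card_ord leqnn.
  have : k \in [set col x y | y in [set~ x]] by rewrite F inE.
  case/imsetP => y hy hk; exists y => //; by move: hy; rewrite !inE.
pose t (v x : 'I_s) := if v == z then x
  else odflt x [pick y | (y != x) && (col x y == col z v)].
have tz : forall x, t z x = x by move=> x; rewrite /t eqxx.
have tP : forall v x, v != z -> t v x != x /\ col x (t v x) = col z v.
  move=> v x hv; rewrite /t (negbTE hv).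
  case: pickP => [y /andP[h1 /eqP h2] //|H].
  case: (ex x (col z v)) => y h1 h2.
  by move: (H y); rewrite h1 h2 eqxx.
have tU : forall v x y, v != z -> y != x -> col x y = col z v -> y = t v x.
  move=> v x y hv hy E; case: (tP v x hv) => h1 h2.
  apply/eqP; apply/negPn/negP => ne.
  by apply: (hmatch x y (t v x) _ _ ne); rewrite 1?eq_sym // E h2.
have tI : forall v x, t v (t v x) = x.
  move=> v x; have [->|hv] := eqVneq v z; first by rewrite !tz.
  case: (tP v x hv) => h1 h2.
  by apply/esym/tU => //; [rewrite eq_sym | rewrite hsym].
have tinj : forall v, injective (t v) by move=> v; apply: (can_inj (tI v)).
have t0 : forall v, t v z = v.
  move=> v; have [->|hv] := eqVneq v z; first by rewrite tz.
  by apply/esym/tU; rewrite // eq_sym.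
pose T v := perm (tinj v).
pose S := [set T v | v : 'I_s].
have TE : forall v x, T v x = t v x by move=> v x; rewrite permE.
have comp : forall u v x, t v (t u x) = t (t v u) x.
  move=> u v x.
  have [->|hu] := eqVneq u z; first by rewrite !tz t0.
  have [->|hv] := eqVneq v z; first by rewrite !tz.
  have [cuv|cuv] := eqVneq (col z u) (col z v).
    have uv : u = v.
      apply/eqP; apply/negPn/negP => ne.
      by apply: (hmatch z u v _ _ ne cuv); rewrite eq_sym.
    subst v; rewrite tI.
    have -> : t u u = z by rewrite -{2}(t0 u) tI.
    by rewrite tz.
  have uv : u != v by apply: contraNneq cuv => ->.
  set w := t v u.
  have wz : w != z.
    apply: contraNneq uv => E; by rewrite -(tI v u) -/w E t0.
  case: (tP u x hu) => n1 e1.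
  set x1 := t u x in n1 e1 *.
  case: (tP v x1 hv) => n2 e2.
  set x2 := t v x1 in n2 e2 *.
  case: (tP v u hv) => nw ew; rewrite -/w in nw ew.
  have [xz|xz] := eqVneq x z.
    by rewrite /x2 /x1 xz t0 t0.
  have x1u : x1 != u.
    by apply: contraNneq xz => E; rewrite -(tI u x) -/x1 E -{2}(t0 u) tI.
  have x2w : x2 != w by rewrite /x2 /w (inj_eq (tinj v)).
  have x2x : x2 != x.
    apply/negP => /eqP E.
    move/eqP: cuv; apply; by rewrite -e1 -e2 E hsym // eq_sym.
  apply: tU => //.
  have A1 : col x1 u = col x2 w.
    apply: (L x1 x2 u w); [by rewrite eq_sym | by rewrite eq_sym | by [] | by rewrite e2 ew].
  have A2 : col x z = col x1 u.
    apply: (L x x1 z u); [by rewrite eq_sym | by rewrite eq_sym | by [] | by rewrite e1].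
  apply: (L x z x2 w); [by [] | by [] | by rewrite eq_sym | by rewrite A2 A1].
have gS : group_set S.
  apply/group_setP; split.
    apply/imsetP; exists z => //; apply/permP => x; by rewrite TE perm1 tz.
  move=> a b /imsetP[u _ ->] /imsetP[v _ ->].
  apply/imsetP; exists (t v u) => //.
  by apply/permP => x; rewrite permM !TE comp.
pose G := Group gS.
have cG : #|G| = s.
  rewrite /= card_in_imset ?card_ord //.
  move=> u v _ _ E.
  by rewrite -(t0 u) -(t0 v) -!TE E.
have ord2 : forall g, g \in G -> (g * g = 1)%g.
  move=> g /imsetP[u _ ->]; apply/permP => x.
  by rewrite permM perm1 !TE tI.
have pn : 2.-nat s.
  apply/pnatP => // q pq qs.
  rewrite -cG in qs.
  case: (Cauchy pq qs) => g gG og.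
  have : (#[g]%g %| 2)%N by rewrite order_dvdn expgS expg1 ord2.
  rewrite og dvdn_prime2 //; by move/eqP=> ->.
case: (p_natP pn) => k ->; by exists k.
Qed.
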